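(* Let $f:\Gamma\to\Gamma$ be an irreducible, expanding graph map with stacks $\mathcal{K}_1,\dots,\mathcal{K}_p$, where $\mathcal{K}_i$ has $n_i$ edges, and let $n=|\mathcal{E}\Gamma|$. Then the stack graph $\mathcal{SG}(f)$ is strongly connected, and for every $i$ the set of all vertices of $\mathcal{SG}(f)$ is contained in the directed ball $B_{n-n_i}(\mathcal{K}_i)$.
   Context: A graph $\Gamma$ is a finite 1-dimensional CW complex with a chosen orientation on each edge; $\mathcal{E}\Gamma$ is its set of edges, $\bar e$ is the reverse of $e$, $\iota,\tau$ the endpoints. An edge path is a nonempty concatenation $u=e_1\cdots e_k$ of oriented edges with $\tau(e_i)=\iota(e_{i+1})$; $|u|=k$ (no cancellation); $u$ traverses $e$ if $e$ or $\bar e$ occurs in it. A graph map $f:\Gamma\to\Gamma$ assigns to vertices vertices and to each oriented edge $e$ an edge path $f(e)$ with $\iota(f(e))=f(\iota(e))$, $f(\bar e)=\overline{f(e)}$; powers are compositions, applied to paths by concatenation without tightening. $T(f)$ has $(i,j)$ entry the number of times $f(e_i)$ traverses $e_j$; $f$ is irreducible if $T(f)$ is irreducible and every vertex has valence $\ge3$; expanding if $|f^n(e)|\to\infty$ for every edge. Stacks: $e$ is mixing if $|f(e)|>1$; surplus if non-mixing and $f(e)\in\{f(u),\overline{f(u)}\}$ for some edge $u\notin\{e,\bar e\}$. Stacks are the classes of the equivalence relation on $\mathcal{E}\Gamma$ (unoriented edges) generated by $e\sim f(e)$ for $e$ non-mixing and non-surplus. Each stack has the form $\mathcal{K}=\{e,f(e),\dots,f^s(e)\}$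 with only $f^s(e)$ mixing or surplus; $f^s(e)$ is the final edge of $\mathcal{K}$. Let $\alpha_i$ be the final edge of $\mathcal{K}_i$. The stack graph $\mathcal{SG}(f)$ is the directed graph with vertex set $\{\mathcal{K}_1,\dots,\mathcal{K}_p\}$ and a directed edge $[\mathcal{K}_i,\mathcal{K}_j]$ whenever $f(\alpha_i)$ contains an edge of $\mathcal{K}_j$; its length is $s([\mathcal{K}_i,\mathcal{K}_j])=\min\{s\ge1:f^s(\alpha_i)\text{ traverses }\alpha_j\}$. For a directed path $P=E_1\cdots E_k$ (edges traversed only in their positive direction), $s(P)=\sum s(E_i)$. The directed ball of size $d$ at $\mathcal{K}_i$ is $B_d(\mathcal{K}_i)=\{\mathcal{K}_j:\text{there is a directed path }P\text{ from }\mathcal{K}_i\text{ to }\mathcal{K}_j\text{ with }s(P)\le d\}$ (the empty path, of length $0$, is allowed, so $\mathcal{K}_i\in B_d(\mathcal{K}_i)$). Strongly connected means there is a directed path between any ordered pair of vertices. *)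

(* Defs.v *)
From HB Require Import structures.
From mathcomp Require Import all_boot all_order all_algebra.
Set Implicit Arguments. Unset Strict Implicit. Unset Printing Implicit Defensive.
Import GRing.Theory Num.Theory.

(* A graph: finite vertex type V, finite type E of (positively oriented,
   i.e. unoriented) edges with endpoints src (iota) and tgt (tau).
   An oriented edge is a pair (e, b) : E * bool; b = true is the chosen
   orientation e, b = false is the reverse edge \bar e.
   A graph map is given by fV : V -> V and, for each positively oriented
   edge e, the edge path fE e = f(e); f(\bar e) := reverse of f(e). *)
Section GraphMaps.
Variables (V E : finType) (src tgt : E -> V).

Definition oedge := (E * bool)%type.
Definition orev (o : oedge) : oedge := (o.1, ~~ o.2).
Definition oiota (o : oedge) : V := if o.2 then src o.1 else tgt o.1.
Definition otau (o : oedge) : V := if o.2 then tgt o.1 else src o.1.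

Fixpoint consec (o : oedge) (p : seq oedge) : bool :=
  if p is o' :: p' then (otau o == oiota o') && consec o' p' else true.
Definition is_edge_path (p : seq oedge) : bool :=
  if p is o :: p' then consec o p' else false.
Definition path_iota (p : seq oedge) (d : V) : V :=
  if p is o :: _ then oiota o else d.
Definition rev_path (p : seq oedge) : seq oedge := rev (map orev p).

Definition valence (v : V) : nat := #|[pred o : oedge | oiota o == v]|.

Definition traverses (p : seq oedge) (e : E) : bool := has (fun o => o.1 == e) p.

Variables (fV : V -> V) (fE : E -> seq oedge).

Definition fo (o : oedge) : seq oedge :=
  if o.2 then fE o.1 else rev_path (fE o.1).
(* image of a path, concatenation without tightening *)
Definition fpath (p : seq oedge) : seq oedge := flatten (map fo p).
Definition fpow (k : nat) (e : E) : seq oedge := iter k fpath [:: (e, true)].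

Definition is_graph_map : Prop :=
  forall e : E, is_edge_path (fE e) /\
    path_iota (fE e) (fV (src e)) = fV (src e) /\
    path_iota (rev_path (fE e)) (fV (tgt e)) = fV (tgt e).

Definition transition : 'M[int]_#|E| :=
  \matrix_(i, j) (count (fun o : oedge => o.1 == enum_val j) (fE (enum_val i)))%:Z%R.

Definition irreducible_matrix n (M : 'M[int]_n) : Prop :=
  forall i j : 'I_n, exists k, (0 < k)%N /\ (0 < (M ^+ k) i j)%R.

Definition irreducible_map : Prop :=
  irreducible_matrix transition /\ forall v : V, (3 <= valence v)%N.

Definition expanding : Prop :=
  forall e : E, forall M : nat, exists N, forall k, (N <= k)%N -> (M <= size (fpow k e))%N.

Definition mixing (e : E) : bool := (1 < size (fE e))%N.
Definition surplus (e : E) : bool :=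
  ~~ mixing e && [exists u : E, (u != e) &&
     ((fE e == fE u) || (fE e == rev_path (fE u)))].

Definition stack_step (e e' : E) : bool :=
  ~~ mixing e && ~~ surplus e && (map fst (fE e) == [:: e']).
Definition stack_rel : rel E :=
  connect (fun x y => stack_step x y || stack_step y x).
Definition stack_of (e : E) : {set E} := [set e' | stack_rel e e'].
Definition stacks : {set {set E}} := [set stack_of e | e : E].

(* final edge of a stack: its (unique) mixing or surplus edge *)
Definition final (K : {set E}) : option E := [pick a in K | mixing a || surplus a].

Definition sg_edge (K K' : {set E}) : Prop :=
  K \in stacks /\ K' \in stacks /\
  exists a, final K = Some a /\ exists2 e', e' \in K' & traverses (fE a) e'.

Definition sg_len (K K' : {set E}) (s : nat) : Prop :=
  exists a b, final K = Some a /\ final K' = Some b /\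
    (0 < s)%N /\ traverses (fpow s a) b /\
    forall s', (0 < s')%N -> (s' < s)%N -> ~~ traverses (fpow s' a) b.

Inductive sg_dpath : {set E} -> {set E} -> nat -> Prop :=
| sg_nil K : sg_dpath K K 0
| sg_cons K K' K'' s w :
    sg_edge K K' -> sg_len K K' s -> sg_dpath K' K'' w -> sg_dpath K K'' (s + w).

Definition strongly_connected_SG : Prop :=
  forall K K', K \in stacks -> K' \in stacks -> exists w, sg_dpath K K' w.

Definition ball (d : nat) (K : {set E}) : {set E} -> Prop :=
  fun K' => K' \in stacks /\ exists2 w, (w <= d)%N & sg_dpath K K' w.

End GraphMaps.

(* Main.v *)
Require Import Defs.
From mathcomp Require Import all_boot all_order all_algebra.
From mathcomp Require Import zify.
Import Order.TTheory GRing.Theory Num.Theory.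
Set Implicit Arguments. Unset Strict Implicit.

Section Proofs.
Variables (E : finType) (fE : E -> seq (E * bool)).

Notation Tr k x y := (traverses (fpow fE k x) y).

Lemma trav_rev (p : seq (E * bool)) (y : E) : traverses (Defs.rev_path p) y = traverses p y.
Proof. by rewrite /traverses /Defs.rev_path has_rev has_map. Qed.

Lemma trav_fo (o : E * bool) (y : E) : traverses (fo fE o) y = traverses (fE o.1) y.
Proof. by rewrite /fo; case: o.2 => //; rewrite trav_rev. Qed.

Lemma trav_fpath (p : seq (E * bool)) (y : E) :
  traverses (Defs.fpath fE p) y = has (fun o => traverses (fE o.1) y) p.
Proof.
elim: p => [|o p IH] //=.
by rewrite /Defs.fpath /= /traverses has_cat -/(traverses _ _) trav_fo -IH.
Qed.

Lemma travP (p : seq (E * bool)) (z : E) : reflect (exists2 o, o \in p & o.1 = z) (traverses p z).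
Proof.
apply: (iffP hasP) => [[o h /eqP]|[o h e]]; exists o => //; exact/eqP.
Qed.

Lemma trav_step k (p : seq (E * bool)) (y : E) :
  traverses (iter k.+1 (Defs.fpath fE) p) y <->
  exists z, traverses (iter k (Defs.fpath fE) p) z /\ traverses (fE z) y.
Proof.
rewrite /= trav_fpath; split.
  by case/hasP => o ho h; exists o.1; split => //; apply/travP; exists o.
case=> z [/travP [o ho <-] h]; apply/hasP; by exists o.
Qed.

Lemma Tr0 (x y : E) : Tr 0 x y = (x == y).
Proof. by rewrite /traverses /= orbF. Qed.

Lemma trav_iter k : forall (p : seq (E * bool)) (y : E),
  traverses (iter k (Defs.fpath fE) p) y <-> exists x, traverses p x /\ Tr k x y.
Proof.
elim: k => [|k IH] p y.
  split => [h|[x [h]]]; last by rewrite Tr0 => /eqP <-.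
  by exists y; rewrite Tr0.
rewrite trav_step; split.
  case=> z [/IH [x [hx hz]] h]; exists x; split => //.
  rewrite /fpow; apply/trav_step; by exists z.
case=> x [hx]; rewrite /fpow => /trav_step [z [hz h]]; exists z; split => //.
apply/IH; by exists x.
Qed.

Lemma TrS k (x y : E) : Tr k.+1 x y <-> exists z, Tr k x z /\ traverses (fE z) y.
Proof. exact: trav_step. Qed.

Lemma TrSr k (x y : E) : Tr k.+1 x y <-> exists z, traverses (fE x) z /\ Tr k z y.
Proof.
rewrite /fpow iterSr.
have -> : Defs.fpath fE [:: (x, true)] = fE x by rewrite /Defs.fpath /= cats0.
exact: trav_iter.
Qed.

Definition sink e := mixing fE e || surplus fE e.

Lemma step_fun x y z : stack_step fE x y -> stack_step fE x z -> y = z.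
Proof.
by rewrite /stack_step => /andP[_ /eqP ->] /andP[_ /eqP []].
Qed.

Lemma step_nsink x y : stack_step fE x y -> ~~ sink x.
Proof. by rewrite /stack_step /sink negb_or => /andP[-> _]. Qed.

Lemma sink_path p : forall x,
  path (fun x y => stack_step fE x y || stack_step fE y x) x p ->
  sink (last x p) -> connect (stack_step fE) x (last x p).
Proof.
elim: p => [|y p IH] x /=; first by rewrite connect0.
move=> /andP[hxy hp] hs; have := IH y hp hs.
case/orP: hxy => h.
  by apply: connect_trans; apply: connect1.
case/connectP => q; case: q => [|z q] /=.
  move=> _ e; move: hs (step_nsink h); first [rewrite e | rewrite -e] => ->; done.
move=> /andP[hyz hq] e; have ez := step_fun h hyz; subst z.
by apply/connectP; exists q.
Qed.

Lemma sink_uniq e a : stack_rel fE e a -> sink e -> sink a -> e = a.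
Proof.
case/connectP => p hp -> he ha.
case/connectP: (sink_path hp ha) => q; case: q => [|z q] /=; first by move=> _ ->.
by move=> /andP[h _]; move: he; rewrite (negbTE (step_nsink h)).
Qed.

Lemma stack_sym x y : stack_rel fE x y = stack_rel fE y x.
Proof. by rewrite /stack_rel sym_connect_sym // => u v; rewrite orbC. Qed.

Lemma stack_trans x y z : stack_rel fE x y -> stack_rel fE y z -> stack_rel fE x z.
Proof. exact: connect_trans. Qed.

Lemma stack_ofE x y : stack_rel fE x y -> stack_of fE x = stack_of fE y.
Proof.
move=> h; apply/setP => z; rewrite !inE; apply/idP/idP => h2.
  by apply: stack_trans h2; rewrite stack_sym.
exact: stack_trans h h2.
Qed.

Lemma in_stack_of x : x \in stack_of fE x.
Proof. by rewrite inE; apply: connect0. Qed.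

Lemma final_sink a : sink a -> final fE (stack_of fE a) = Some a.
Proof.
move=> ha; rewrite /final; case: pickP => [b /andP[hb hsb]|h].
  by congr Some; symmetry; apply: sink_uniq => //; rewrite inE in hb.
by move: (h a); rewrite in_stack_of /= -/(sink a) ha.
Qed.

Lemma step_stack x y : stack_step fE x y -> stack_rel fE x y.
Proof. by move=> h; apply: connect1; rewrite h. Qed.

Hypothesis hne : forall e, fE e <> [::].

Lemma nonsink_single z : ~~ sink z -> exists y c, fE z = [:: (y, c)] /\ stack_step fE z y.
Proof.
move=> hz; move: (@hne z) hz; rewrite /sink /mixing negb_or => hn /andP[hm hs].
case e: (fE z) hn hm => [|[y c] [|o q]] //= _ _.
exists y, c; split => //.
rewrite /stack_step /mixing hs e /=.
by rewrite eqxx.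

Qed.

Lemma nonsink_in_stack a z y : sink a -> z \in stack_of fE a -> z != a ->
  traverses (fE z) y -> y \in stack_of fE a.
Proof.
move=> ha hz hza.
have hnz : ~~ sink z.
  apply/negP => hs; move: hza; rewrite inE in hz.
  by rewrite (sink_uniq hz ha hs) eqxx.
case: (nonsink_single hnz) => y' [c [e hst]].
rewrite e /traverses /= orbF => /eqP <-.
rewrite inE; apply: stack_trans (step_stack hst); by rewrite inE in hz.
Qed.

Hypothesis hexp : expanding fE.

Lemma final_exists e : exists a, final fE (stack_of fE e) = Some a /\ sink a /\ a \in stack_of fE e.
Proof.
rewrite /final; case: pickP => [a /andP[ha hs]|h]; first by exists a.
exfalso.
have P : forall k, exists x b, fpow fE k e = [:: (x, b)] /\ x \in stack_of fE e.
  elim=> [|k [x [b [hk hx]]]]; first by exists e, true; rewrite in_stack_of.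
  have hsx : ~~ sink x by move: (h x); rewrite hx /= /sink => ->.
  case: (nonsink_single hsx) => y [c [ey hst]].
  have hy : y \in stack_of fE e.
    rewrite inE; apply: stack_trans (step_stack hst); by rewrite inE in hx.
  rewrite /fpow /= -/(fpow fE k e) hk /Defs.fpath /= cats0 /fo /=.
  clear hk; case: b; rewrite ey /=; [exists y, c | exists y, (~~ c)]; by [].
case: (hexp e 2) => N hN.
case: (P N) => x [b [hk _]]; move: (hN N (leqnn N)); by rewrite hk.
Qed.

Lemma stacks_of x : stack_of fE x \in stacks fE.
Proof. by apply/imsetP; exists x. Qed.

Lemma dpath_snoc K K' K'' w s : sg_dpath fE K K' w -> sg_edge fE K' K'' ->
  sg_len fE K' K'' s -> sg_dpath fE K K'' (w + s).
Proof.
elim=> [K0 he hl|K0 K1 K2 s0 w0 he hl _ IH he' hl'].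
  by rewrite add0n -[s]addn0; apply: sg_cons he hl (sg_nil _ _).
rewrite -addnA; exact: sg_cons he hl (IH he' hl').
Qed.

Lemma dist a s : sink a -> forall x r b, Tr s a x ->
  final fE (stack_of fE x) = Some b -> Tr r x b ->
  exists2 w, w <= s + r & sg_dpath fE (stack_of fE a) (stack_of fE x) w.
Proof.
move=> ha; elim: s => [|s IH] x r b.
  rewrite Tr0 => /eqP <- _ _; exists 0 => //; exact: sg_nil.
case/TrS => z [hz hzx] hfx hr.
case hsz : (sink z).
  have [w hw hp] := IH z 0 z hz (final_sink hsz) (eqbRL (Tr0 z z) (eqxx z)).
  have hex : exists m, (0 < m) && Tr m z b.
    exists r.+1; apply/andP; split => //; apply/TrSr; by exists x.
  case: (ex_minnP hex) => L /andP[hL0 hL] hmin.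
  have hLr : L <= r.+1.
    apply: hmin; apply/andP; split => //; apply/TrSr; by exists x.
  exists (w + L); first by lia.
  apply: dpath_snoc hp _ _.
    split; first exact: stacks_of.
    split; first exact: stacks_of.
    exists z; split; first exact: final_sink.
    exists x => //; exact: in_stack_of.
  exists z, b; split; first exact: final_sink.
  split => //; split => //; split => //.
  move=> s' hs' hs'L; apply/negP => ht.
  have := hmin s'; rewrite hs' ht => /(_ isT); by rewrite leqNgt hs'L.
have := nonsink_single (negbT hsz); case=> y [c [e hst]].
move: hzx; rewrite e /traverses /= orbF => /eqP ey; subst y.
have hsE := stack_ofE (step_stack hst).
have [w hw hp] : exists2 w, w <= s + r.+1 & sg_dpath fE (stack_of fE a) (stack_of fE z) w.
  apply: IH hz _ _; first by rewrite hsE; exact: hfx.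
  apply/TrSr; exists x; split => //; by rewrite e /traverses /= eqxx.
by exists w; [lia | rewrite -hsE].
Qed.


Lemma Tpow k (i j : 'I_#|E|) :
  (0 <= (transition fE ^+ k) i j)%R /\
  ((0 < (transition fE ^+ k) i j)%R -> Tr k (enum_val i) (enum_val j)).
Proof.
elim: k i j => [|k IH] i j.
  rewrite expr0 !mxE; case: (eqVneq i j) => [->|hij] /=.
    by split => // _; rewrite eqxx.
  by split => //; rewrite ltxx.
have hT : forall l, (0 <= transition fE l j)%R.
  by move=> l; rewrite mxE.
rewrite exprSr -mulmxE mxE; split.
  by apply: sumr_ge0 => l _; apply: mulr_ge0; [case: (IH i l) | exact: hT].
move=> hpos.
have [l /andP[_ hl]] : exists l, true && (0 < (transition fE ^+ k) i l * transition fE l j)%R.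
  apply: psumr_neq0P; last by move=> e; move: hpos; rewrite e ltxx.
  by move=> l _; apply: mulr_ge0; [case: (IH i l) | exact: hT].
have [ha hb] := (IH i l); move: (hT l) => hc.
have ha' : (0 < (transition fE ^+ k) i l)%R.
  rewrite lt_def ha andbT; apply/eqP => e; move: hl; by rewrite e mul0r ltxx.
have hb' : (0 < transition fE l j)%R.
  rewrite lt_def hc andbT; apply/eqP => e; move: hl; by rewrite e mulr0 ltxx.
apply/TrS; exists (enum_val l); split; first exact: hb.
move: hb'; rewrite mxE ltz_nat -has_count; by [].
Qed.

Fixpoint Rs (K : {set E}) d : {set E} :=
  if d is d'.+1 then K :|: [set y | [exists z in Rs K d', traverses (fE z) y]] else K.

Lemma R_mono K d : Rs K d \subset Rs K d.+1.
Proof.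
elim: d => [|d IH]; first exact: subsetUl.
rewrite [Rs K d.+1]/= [Rs K d.+2]/=; apply: setUS; apply/subsetP => y; rewrite !inE.
case/existsP => z /andP[hz ht]; apply/existsP; exists z; rewrite ht andbT.
exact: (subsetP IH).
Qed.

Lemma R_le K m d : m <= d -> Rs K m \subset Rs K d.
Proof.
elim: d => [|d IH]; first by rewrite leqn0 => /eqP ->.
rewrite leq_eqVlt => /orP[/eqP ->|h]; first exact: subxx.
exact: subset_trans (IH h) (R_mono K d).
Qed.

Lemma R_complete a s y : Tr s a y -> y \in Rs (stack_of fE a) s.
Proof.
elim: s y => [|s IH] y; first by rewrite Tr0 => /eqP <-; exact: in_stack_of.
case/TrS => z [hz h]; rewrite /= inE; apply/orP; right; rewrite inE.
by apply/existsP; exists z; rewrite h andbT; exact: IH.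
Qed.

Lemma R_sound a d y : sink a -> y \in Rs (stack_of fE a) d ->
  y \in stack_of fE a \/ exists s, [/\ 0 < s, s <= d & Tr s a y].
Proof.
move=> ha; elim: d y => [|d IH] y; first by left.
rewrite /= inE => /orP[h|]; first by left.
rewrite inE => /existsP[z /andP[hz ht]].
case: (IH z hz) => [hzK|[s [h0 hs hzs]]].
  case: (eqVneq z a) => [ez|hza].
    subst z; right; exists 1; split => //; apply/TrS; exists a; split => //.
    by rewrite Tr0.
  by left; exact: nonsink_in_stack ha hzK hza ht.
right; exists s.+1; split => //; apply/TrS; by exists z.
Qed.

Lemma R_stable K d : Rs K d.+1 = Rs K d -> forall k, Rs K (d + k) = Rs K d.
Proof.
move=> H; elim=> [|k IH]; first by rewrite addn0.
rewrite addnS; transitivity (Rs K d.+1); last exact: H.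
by rewrite [LHS]/= [RHS]/= IH.
Qed.

Lemma R_card a d : sink a -> (forall y, exists s, Tr s a y) ->
  minn #|E| (#|stack_of fE a| + d) <= #|Rs (stack_of fE a) d|.
Proof.
move=> ha reach; set K := stack_of fE a.
elim: d => [|d IH]; first by rewrite addn0 geq_minr.
case: (eqVneq (Rs K d.+1) (Rs K d)) => [H|H].
  have full : Rs K d.+1 = setT.
    rewrite H; apply/setP => y; rewrite inE.
    case: (reach y) => s hs; have hy := R_complete hs.
    case: (leqP s d) => hsd; first exact: (subsetP (R_le K hsd)).
    by move: hy; rewrite -(subnKC (ltnW hsd)) (R_stable H).
  by rewrite full cardsT geq_minl.
have hp : Rs K d \proper Rs K d.+1 by rewrite properEneq eq_sym H R_mono.
have := proper_card hp; lia.
Qed.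

Lemma reach_all x y : irreducible_matrix (transition fE) -> exists s, Tr s x y.
Proof.
move=> hirr; case: (hirr (enum_rank x) (enum_rank y)) => k [_ hk].
exists k; move: (Tpow k (enum_rank x) (enum_rank y)) => [_ h].
by move: (h hk); rewrite !enum_rankK.
Qed.

Lemma ball_main : irreducible_matrix (transition fE) ->
  forall K, K \in stacks fE -> forall K', K' \in stacks fE ->
  ball fE (#|E| - #|K|) K K'.
Proof.
move=> hirr K /imsetP[e0 _ ->] K' hK'; move: (hK') => /imsetP[e1 _ eK'].
case: (final_exists e0) => a [_ [ha haK]].
case: (final_exists e1) => b [_ [hb hbK]].
have eK : stack_of fE e0 = stack_of fE a by apply: stack_ofE; rewrite inE in haK.
have eK'b : K' = stack_of fE b by rewrite eK'; apply: stack_ofE; rewrite inE in hbK.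
rewrite eK eK'b; split; first exact: stacks_of.
set d := #|E| - #|stack_of fE a|.
have hc := R_card d ha (fun y => reach_all a y hirr).
have hle : #|stack_of fE a| <= #|E| by apply: max_card.
have full : Rs (stack_of fE a) d = setT.
  apply/eqP; rewrite eqEcard subsetT cardsT; move: hc; rewrite /d; lia.
have : b \in Rs (stack_of fE a) d by rewrite full inE.
case/(R_sound ha) => [hbA|[s [h0 hs hst]]].
  have eab : a = b by apply: sink_uniq ha hb; rewrite inE in hbA.
  by exists 0 => //; rewrite eab; exact: sg_nil.
have [w hw hp] := dist ha hst (final_sink hb) (eqbRL (Tr0 b b) (eqxx b)).
by exists w => //; lia.
Qed.

End Proofs.

Theorem lemma4p6 (V E : finType) (src tgt : E -> V) (fV : V -> V)
    (fE : E -> seq (E * bool)) :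
  is_graph_map src tgt fV fE ->
  irreducible_map src tgt fE ->
  expanding fE ->
  strongly_connected_SG fE /\
  forall K, K \in stacks fE ->
    forall K', K' \in stacks fE -> ball fE (#|E| - #|K|) K K'.
Proof.
move=> hg [hirr _] hexp.
have hne : forall e, fE e <> [::].
  by move=> e he; case: (hg e); rewrite he.
have hb := ball_main hne hexp hirr.
split => // K K' hK hK'.
by case: (hb K hK K' hK') => _ [w _ hw]; exists w.
Qed.
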